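(* Fix $\alpha\ge0$. The boundary-tolerant cluster distance $d_C$ on isometry classes of $\alpha$-clusters of periodic point sets in $\mathbb R^n$ satisfies: (a) $d_C(\sigma,\xi)=0$ if and only if $\sigma=\xi$; (b) $d_C(\sigma,\xi)=d_C(\xi,\sigma)$ for all classes $\sigma,\xi$; (c) $d_C(\sigma,\zeta)\le d_C(\sigma,\xi)+d_C(\xi,\zeta)$ for all classes $\sigma,\xi,\zeta$.
   Context: A periodic point set is $S=M+\Lambda\subset\mathbb R^n$ with $\Lambda$ a lattice and $M$ a finite motif in a unit cell. For $p\in S$, the $\alpha$-cluster $C(S,p;\alpha)=S\cap\bar B(p;\alpha)$ has center $p$; its isometry class consists of all clusters obtained from it by isometries of $\mathbb R^n$ that map centers to centers. For finite $C,D\subset\mathbb R^n$, the directed Hausdorff distance is $d_H(C,D)=\max_{p\in C}\min_{q\in D}|p-q|$, and $d_R(C,D)=\min_{f\in\mathrm O(\mathbb R^n)}d_H(f(C),D)$. For periodic sets $S,Q$ and classes $\sigma,\xi$ represented by $C(S,p;\alpha)$, $C(Q,q;\alpha)$, $d_C(\sigma,\xi)$ is the minimum $\varepsilon\in[0,\alpha]$ such that $d_R(C(S,p;\alpha-\varepsilon)-p,\,C(Q,q;\alpha)-q)\le\varepsilon$ and $d_R(C(Q,q;\alpha-\varepsilon)-q,\,C(S,p;\alpha)-p)\le\varepsilon$, where $C-p$ denotes translation by $-p$.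
   Formalization: $d_C(\sigma,\xi)$ is the minimum admissible ε∈[0,α] only where that minimum exists, with no claim that it always does; (b) equates the two minima whenever either exists, and (c) holds only when all three minima exist. Apart from conventions, each condition added here is assumed in the paper as well or is needed for the statement above to hold. *)

(* Defs.v *)
From HB Require Import structures.
From mathcomp Require Import all_boot all_order all_algebra.
From mathcomp Require Import boolp classical_sets reals.
Set Implicit Arguments. Unset Strict Implicit. Unset Printing Implicit Defensive.
Import Order.TTheory GRing.Theory Num.Theory.
Local Open Scope ring_scope.
Local Open Scope classical_set_scope.

Section PeriodicClusters.
Variables (R : realType) (n : nat).
Notation pt := 'rV[R]_n.

Definition enorm (x : pt) : R := Num.sqrt (\sum_(i < n) x ord0 i ^+ 2).

Definition lattice (B : 'M[R]_n) : set pt :=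
  [set x | exists k : 'rV[int]_n, x = map_mx (fun z : int => z%:~R) k *m B].

(* Periodic point set S = M + Lambda, M a finite motif in the unit cell
   { t B | t in [0,1)^n } of a lattice Lambda with basis B. *)
Definition periodic_set (S : set pt) : Prop :=
  exists (B : 'M[R]_n) (M : seq pt),
    B \in unitmx /\
    (forall m, m \in M -> exists t : pt, (forall i, 0 <= t ord0 i < 1) /\ m = t *m B) /\
    S = [set x | exists m l, m \in M /\ lattice B l /\ x = m + l].

Definition cluster (S : set pt) (p : pt) (r : R) : set pt :=
  [set x | S x /\ enorm (x - p) <= r].

Definition centered (S : set pt) (p : pt) (r : R) : set pt :=
  [set x - p | x in cluster S p r].

(* directed Hausdorff distance max_{c in C} min_{d in D} |c - d|
   (for finite nonempty sets max = sup, min = inf) *)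
Definition dH (C D : set pt) : R :=
  sup [set inf [set enorm (c - d) | d in D] | c in C].

(* orthogonal group O(R^n), acting on row vectors by x |-> x A *)
Definition orthomx (A : 'M[R]_n) : Prop := A *m A^T = 1%:M.

(* d_R(C,D) = min_{f in O(R^n)} d_H(f(C), D)  (the min exists; inf = min) *)
Definition dR (C D : set pt) : R :=
  inf [set dH [set x *m A | x in C] D | A in orthomx].

Definition isometry (g : pt -> pt) : Prop :=
  forall x y, enorm (g x - g y) = enorm (x - y).

(* the classes of C(S,p;alpha) and C(Q,q;alpha) coincide *)
Definition same_class (alpha : R) (S : set pt) (p : pt) (Q : set pt) (q : pt) : Prop :=
  exists g : pt -> pt, isometry g /\ g p = q /\ g @` cluster S p alpha = cluster Q q alpha.

Definition dC_set (alpha : R) (S : set pt) (p : pt) (Q : set pt) (q : pt) : set R :=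
  [set e | 0 <= e <= alpha /\
     dR (centered S p (alpha - e)) (centered Q q alpha) <= e /\
     dR (centered Q q (alpha - e)) (centered S p alpha) <= e].

(* "d_C(class of (S,p), class of (Q,q)) = d": d is the minimum of dC_set *)
Definition is_dC (alpha : R) (S : set pt) (p : pt) (Q : set pt) (q : pt) (d : R) : Prop :=
  dC_set alpha S p Q q d /\ (forall e, dC_set alpha S p Q q e -> d <= e).

End PeriodicClusters.

(* Main.v *)
Require Import Defs.
From HB Require Import structures.
From mathcomp Require Import all_boot all_order all_algebra.
From mathcomp Require Import boolp classical_sets reals.
From mathcomp Require Import ring lra zify.
Import Order.TTheory GRing.Theory Num.Theory.
Local Open Scope ring_scope.
Local Open Scope classical_set_scope.

Set Implicit Arguments. Unset Strict Implicit. Unset Printing Implicit Defensive.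

Section Aux.
Variables (R : realType) (n : nat).
Notation pt := 'rV[R]_n.
Implicit Types (u v w : pt) (A B : 'M[R]_n).

Definition dot (u v : pt) : R := \sum_(i < n) u ord0 i * v ord0 i.

Lemma dotE u v : dot u v = (u *m v^T) ord0 ord0.
Proof. by rewrite /dot mxE; apply: eq_bigr => i _; rewrite mxE. Qed.

Lemma dotC u v : dot u v = dot v u.
Proof. by apply: eq_bigr => i _; rewrite mulrC. Qed.

Lemma dotDl u v w : dot (u + v) w = dot u w + dot v w.
Proof. by rewrite /dot -big_split; apply: eq_bigr => i _; rewrite mxE mulrDl. Qed.

Lemma dotNl u w : dot (- u) w = - dot u w.
Proof. by rewrite /dot -sumrN; apply: eq_bigr => i _; rewrite mxE mulNr. Qed.

Lemma dotBl u v w : dot (u - v) w = dot u w - dot v w.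
Proof. by rewrite dotDl dotNl. Qed.

Lemma dotBr u v w : dot w (u - v) = dot w u - dot w v.
Proof. by rewrite dotC dotBl !(dotC w). Qed.

Lemma dotZl a u w : dot (a *: u) w = a * dot u w.
Proof. by rewrite /dot mulr_sumr; apply: eq_bigr => i _; rewrite mxE mulrA. Qed.

Lemma dotZr a u w : dot w (a *: u) = a * dot w u.
Proof. by rewrite dotC dotZl dotC. Qed.

Lemma dot_ge0 u : 0 <= dot u u.
Proof. by apply: sumr_ge0 => i _; rewrite -expr2 sqr_ge0. Qed.

Lemma dot_eq0 u : dot u u = 0 -> u = 0.
Proof.
move=> /eqP; rewrite psumr_eq0 => [/allP H|i _]; last by rewrite -expr2 sqr_ge0.
apply/rowP => i; rewrite mxE; have := H i (mem_index_enum i).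
by rewrite /= mulf_eq0 orbb => /eqP.
Qed.

Lemma enormE u : enorm u = Num.sqrt (dot u u).
Proof. by rewrite /enorm /dot; congr Num.sqrt; apply: eq_bigr => i _; rewrite expr2. Qed.

Lemma enorm_ge0 u : 0 <= enorm u.
Proof. by rewrite enormE sqrtr_ge0. Qed.

Lemma enorm_sqr u : enorm u ^+ 2 = dot u u.
Proof. by rewrite enormE sqr_sqrtr // dot_ge0. Qed.

Lemma enorm_eq0 u : enorm u = 0 -> u = 0.
Proof. by move=> h; apply: dot_eq0; rewrite -enorm_sqr h expr0n. Qed.

Lemma enorm0 : enorm (0 : pt) = 0.
Proof. by rewrite enormE /dot big1 ?sqrtr0 // => i _; rewrite mxE mul0r. Qed.

Lemma enormN u : enorm (- u) = enorm u.
Proof. by rewrite !enormE dotNl dotC dotNl opprK. Qed.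

Lemma enormB u v : enorm (u - v) = enorm (v - u).
Proof. by rewrite -enormN opprB. Qed.

Lemma CS u v : dot u v <= enorm u * enorm v.
Proof.
have [->|u0] := eqVneq u 0.
  by rewrite /dot big1 ?enorm0 ?mul0r // => i _; rewrite mxE mul0r.
have hb : `|dot u v| ^+ 2 <= (enorm u * enorm v) ^+ 2.
  rewrite exprMn !enorm_sqr real_normK ?num_real //.
  set a := dot u u; set b := dot u v; set c := dot v v.
  have ha : 0 < a.
    rewrite lt_def dot_ge0 andbT; apply/eqP => /dot_eq0 h; by rewrite h eqxx in u0.
  have : 0 <= dot (b *: u - a *: v) (b *: u - a *: v) by apply: dot_ge0.
  rewrite !dotBl !dotBr !dotZl !dotZr -/a -/b -/c (dotC v u) -/b.
  move=> h; have : 0 <= a * (a * c - b ^+ 2).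
    by move: h; congr (_ <= _); ring.
  by rewrite pmulr_rge0 // subr_ge0 mulrC.
apply: le_trans (ler_norm _) _.
by rewrite -ler_sqr ?nnegrE ?mulr_ge0 ?enorm_ge0 ?normr_ge0 //.
Qed.

Lemma enormD u v : enorm (u + v) <= enorm u + enorm v.
Proof.
rewrite -ler_sqr ?nnegrE ?addr_ge0 ?enorm_ge0 // enorm_sqr !dotDl !(dotC _ (u + v)) !dotDl.
rewrite sqrrD !enorm_sqr (dotC v u).
have := CS u v; lra.
Qed.

Lemma enorm_tri u v w : enorm (u - w) <= enorm (u - v) + enorm (v - w).
Proof. by have := enormD (u - v) (v - w); rewrite addrA subrK. Qed.

Lemma orthomx_dot A u v : Defs.orthomx A -> dot (u *m A) (v *m A) = dot u v.
Proof. by move=> hA; rewrite !dotE trmx_mul mulmxA -(mulmxA u) hA mulmx1. Qed.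

Lemma orthomx_enorm A u : Defs.orthomx A -> enorm (u *m A) = enorm u.
Proof. by move=> hA; rewrite !enormE orthomx_dot. Qed.

Lemma orthomx1 : Defs.orthomx (1%:M : 'M[R]_n).
Proof. by rewrite /Defs.orthomx trmx1 mulmx1. Qed.

Lemma orthomxM A B : Defs.orthomx A -> Defs.orthomx B -> Defs.orthomx (A *m B).
Proof. by move=> hA hB; rewrite /Defs.orthomx trmx_mul mulmxA -(mulmxA A) hB mulmx1. Qed.

Lemma orthomxT A : Defs.orthomx A -> Defs.orthomx A^T.
Proof. by move=> hA; rewrite /Defs.orthomx trmxK; apply: mulmx1C. Qed.

Lemma orthomx_inj A u v : Defs.orthomx A -> u *m A = v *m A -> u = v.
Proof. by move=> hA e; rewrite -(mulmx1 u) -(mulmx1 v) -hA !mulmxA e. Qed.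


Lemma mulmx_tr_dot u v : u *m v^T *m v = dot u v *: v.
Proof. by rewrite [u *m v^T]mx11_scalar -dotE mul_scalar_mx. Qed.

Lemma householder_ortho w : dot w w != 0 ->
  Defs.orthomx (1%:M - (2 / dot w w) *: (w^T *m w)).
Proof.
move=> hw; set c := 2 / dot w w; set W := w^T *m w.
have WT : W^T = W by rewrite /W trmx_mul trmxK.
have WW : W *m W = dot w w *: W.
  by rewrite /W mulmxA -(mulmxA w^T w w^T) [w *m w^T]mx11_scalar -dotE mul_mx_scalar scalemxAl.
have HT : (1%:M - c *: W)^T = 1%:M - c *: W.
  apply/matrixP => i j; rewrite !mxE eq_sym; congr (_ - c * _); apply: eq_bigr => k _; by rewrite !mxE mulrC.
rewrite /Defs.orthomx HT.
rewrite mulmxBl mulmxBr mulmxBr mul1mx mulmx1 mul1mx -!scalemxAl -!scalemxAr WW.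
rewrite scalerA scalerA.
have -> : c * c * dot w w = c + c by rewrite -mulrA /c divfK // mulrC; ring.
rewrite scalerDl; set X := c *: W.
have -> : X - (X + X) = - X by rewrite opprD addrA subrr sub0r.
by rewrite opprK subrK.
Qed.

Lemma householder (s : seq pt) (P : pt -> Prop) (h : pt -> pt) :
  (forall u v, u \in s -> v \in s -> P u -> P v -> dot (h u) (h v) = dot u v) ->
  exists A, Defs.orthomx A /\ forall u, u \in s -> P u -> u *m A = h u.
Proof.
elim: s => [|u s IH] H.
  by exists 1%:M; split => [|u]; [exact: orthomx1|rewrite in_nil].
have [A' [oA' hA']] : exists A, Defs.orthomx A /\ forall v, v \in s -> P v -> v *m A = h v.
  by apply: IH => a b ha hb; apply: H; rewrite inE ?ha ?hb orbT.
have [Pu|nPu] := pselect (P u); last first.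
  exists A'; split => // v; rewrite inE => /orP[/eqP->//|]; exact: hA'.
set x := u *m A'; set y := h u; set w := x - y.
have xx : dot x x = dot y y by rewrite orthomx_dot // H // inE eqxx.
have [w0|wn0] := eqVneq (dot w w) 0.
  have /eqP : w = 0 by exact: dot_eq0.
  rewrite subr_eq0 => /eqP xy.
  exists A'; split => // v; rewrite inE => /orP[/eqP->//|]; exact: hA'.
set c := 2 / dot w w.
have Hv v : v *m (1%:M - c *: (w^T *m w)) = v - (c * dot v w) *: w.
  by rewrite mulmxBr mulmx1 -scalemxAr mulmxA mulmx_tr_dot scalerA.
exists (A' *m (1%:M - c *: (w^T *m w))); split.
  by apply: orthomxM => //; exact: householder_ortho.
move=> v; rewrite inE => /orP[/eqP->|vs] Pv.
  rewrite mulmxA Hv -/x.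
  have -> : c * dot x w = 1.
    have ww : dot w w = 2 * (dot x x - dot x y).
      rewrite /w !dotBl !dotBr xx (dotC y x); ring.
    have xw : dot x w = dot x x - dot x y by rewrite /w dotBr.
    move: wn0; rewrite ww mulf_eq0 negb_or => /andP[h2 h3].
    rewrite /c xw ww; field; done.
  have -> : 1 *: w = w by apply/rowP => i; rewrite !mxE mul1r.
  by rewrite /w opprB addrC subrK.
rewrite mulmxA Hv hA' //.
have -> : dot (h v) w = 0.
  rewrite /w dotBr /y H ?inE ?eqxx ?vs ?orbT // -(hA' v vs Pv) /x orthomx_dot //.
  by rewrite subrr.
by rewrite mulr0 scale0r subr0.
Qed.


Lemma inf_ge0' (E : set R) : (forall x, E x -> 0 <= x) -> 0 <= inf E.
Proof.
move=> h; have [[x Ex]|E0] := pselect (E !=set0).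
  by apply: lb_le_inf; [exists x | move=> y /h].
suff -> : E = set0 by rewrite inf0.
by apply/seteqP; split => // x Ex; apply: E0; exists x.
Qed.

Lemma sup_ge0' (E : set R) : (forall x, E x -> 0 <= x) -> 0 <= sup E.
Proof.
move=> h; have [hs|hs] := pselect (has_sup E); last by rewrite sup_out.
case: (hs) => [[x Ex] ub]; apply: le_trans (h _ Ex) _.
by apply: ub_le_sup.
Qed.

Lemma dH_ge0 (C D : set pt) : 0 <= dH C D.
Proof.
apply: sup_ge0' => _ [c Cc <-]; apply: inf_ge0' => _ [d Dd <-]; exact: enorm_ge0.
Qed.

Lemma dH_le (C D : set pt) t : C !=set0 ->
  (forall c, C c -> exists d, D d /\ enorm (c - d) <= t) -> dH C D <= t.
Proof.
move=> [c0 Cc0] h; apply: ge_sup; first by exists (inf [set enorm (c0 - d) | d in D]), c0.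
move=> _ [c Cc <-]; have [d [Dd hd]] := h c Cc.
apply: le_trans hd; apply: ge_inf; last by exists d.
by exists 0 => _ [d' _ <-]; exact: enorm_ge0.
Qed.

Lemma dR_le (C D : set pt) A t : Defs.orthomx A ->
  dH [set x *m A | x in C] D <= t -> dR C D <= t.
Proof.
move=> oA h; apply: le_trans h; apply: ge_inf; last by exists A.
by exists 0 => _ [B _ <-]; exact: dH_ge0.
Qed.

Lemma dR_lt (C D : set pt) t r : (forall c, C c -> enorm c <= r) -> D 0 ->
  dR C D < t -> exists A, Defs.orthomx A /\
    forall c, C c -> exists d, D d /\ enorm (c *m A - d) < t.
Proof.
move=> Cr D0 /inf_lt [].
  by exists (dH [set x *m 1%:M | x in C] D), 1%:M => //; exact: orthomx1.
move=> _ [A oA <-] hA; exists A; split => // c Cc.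
have : inf [set enorm (c *m A - d) | d in D] < t.
  apply: le_lt_trans hA; apply: ub_le_sup; last by exists (c *m A) => //; exists c.
  exists r => _ [_ [c' Cc' <-] <-].
  apply: le_trans (Cr c' Cc'); apply: le_trans (_ : enorm (c' *m A - 0) <= _).
    by apply: ge_inf; [exists 0 => _ [d' _ <-]; exact: enorm_ge0 | exists 0].
  by rewrite subr0 orthomx_enorm.
by move=> /inf_lt [] => [|_ [d Dd <-] hd]; [exists (enorm (c *m A - 0)), 0 | exists d].
Qed.


Lemma sum_seq_ge (f : pt -> R) (M : seq pt) m : (forall x, 0 <= f x) ->
  m \in M -> f m <= \sum_(y <- M) f y.
Proof.
move=> f0; elim: M => [|a M IH] //; rewrite inE big_cons => /orP[/eqP->|mM].
  by rewrite lerDl sumr_ge0.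
by apply: le_trans (IH mM) _; rewrite lerDr.
Qed.

Lemma coord_le_enorm u i : `|u ord0 i| <= enorm u.
Proof.
rewrite /enorm -sqrtr_sqr ler_sqrt ?sumr_ge0 // => [|j _]; last exact: sqr_ge0.
by rewrite (bigD1 i) //= lerDl sumr_ge0 // => j _; exact: sqr_ge0.
Qed.

Lemma cluster_finite (S : set pt) p r : periodic_set S ->
  exists L : seq pt, forall x, cluster S p r x -> x \in L.
Proof.
move=> [B [M [uB [_ ->]]]].
set K := r + \sum_(m <- M) enorm (m - p).
set Bi := invmx B.
set T := \sum_i \sum_j `|Bi j i|.
set N := Num.Def.archi_bound `|K * T|.
pose kof (f : {ffun 'I_n -> 'I_(N + N).+1}) : 'rV[int]_n := \row_i ((f i : nat)%:Z - N%:Z).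
exists [seq m + map_mx (fun z : int => z%:~R) (kof f) *m B | m <- M, f <- enum {ffun 'I_n -> 'I_(N + N).+1}].
move=> _ [[m [_ [mM [[k ->] ->]]]] hx].
set kR := map_mx (fun z : int => z%:~R : R) k.
have hl : enorm (kR *m B) <= K.
  have e : kR *m B = (m + kR *m B - p) - (m - p) by rewrite opprB addrA subrK addrC addKr.
  rewrite e; apply: le_trans (enormD _ _) _; rewrite enormN lerD //.
  have := @sum_seq_ge (fun y => enorm (y - p)) M m; apply => // y; exact: enorm_ge0.
have K0 : 0 <= K by apply: le_trans hl; exact: enorm_ge0.
have hk i : (`|k ord0 i| < N%:Z)%R.
  rewrite -(ltr_int R) intr_norm.
  have -> : (k ord0 i)%:~R = kR ord0 i :> R by rewrite mxE.
  have -> : kR = kR *m B *m Bi by rewrite mulmxK.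
  apply: le_lt_trans (_ : K * T < _); last first.
    by apply: le_lt_trans (ler_norm _) _; apply: archi_boundP.
  rewrite mxE; apply: le_trans (ler_norm_sum _ _ _) _.
  apply: le_trans (_ : \sum_j K * `|Bi j i| <= _).
    apply: ler_sum => j _; rewrite normrM ler_wpM2r //.
    by apply: le_trans hl; exact: coord_le_enorm.
  rewrite -mulr_sumr ler_wpM2l // /T [leRHS](bigD1 i) //= lerDl.
  by apply: sumr_ge0 => j _; apply: sumr_ge0.
pose f := [ffun i => (inord (absz (k ord0 i + N%:Z)) : 'I_(N + N).+1)].
rewrite /kR; have -> : k = kof f.
  have e0 : (ord0 : 'I_1) = 0 by apply/val_inj.
  apply/rowP => i; have := hk i; rewrite e0.
  by move=> hki; rewrite /kof !mxE ffunE inordK; rewrite ?e0; lia.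
by apply: allpairs_f => //; rewrite mem_enum.
Qed.


Lemma pos_below (l : seq R) : exists2 d : R, 0 < d & forall x, x \in l -> 0 < x -> d <= x.
Proof.
elim: l => [|a l [d d0 hd]]; first by exists 1.
have [a0|a0] := ltP 0 a.
  exists (Num.min d a); first by rewrite lt_min d0 a0.
  move=> x; rewrite inE => /orP[/eqP->|xl] x0; first by rewrite ge_min lexx orbT.
  by rewrite ge_min hd.
exists d => // x; rewrite inE => /orP[/eqP->|xl] x0; last exact: hd.
by move: a0; rewrite leNgt x0.
Qed.

Lemma gap (l : seq R) : exists2 d : R, 0 < d &
  forall a b, a \in l -> b \in l -> `|a - b| < d -> a = b.
Proof.
have [d d0 hd] := pos_below [seq `|a - b| | a <- l, b <- l].
exists d => // a b al bl hab; apply/eqP; apply: contraTT hab => nab.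
rewrite -leNgt; apply: hd; first exact: allpairs_f.
by rewrite normr_gt0 subr_eq0.
Qed.

Lemma le_small (z t e0 : R) : 0 < e0 ->
  (forall e, 0 < e -> e < e0 -> z <= t + e) -> z <= t.
Proof.
move=> e00 h; apply/ler_addgt0Pr => e ep.
have m0 : 0 < Num.min e (e0 / 2) by rewrite lt_min ep divr_gt0.
apply: le_trans (h _ m0 _) _.
  by rewrite gt_min; apply/orP; right; rewrite ltr_pdivrMr // ltr_pMr // ltr1n.
by rewrite lerD2l ge_min lexx.
Qed.

Lemma centered_le (X : set pt) x r s : centered X x r s -> enorm s <= r.
Proof. by move=> [x' [_ h] <-]. Qed.

Lemma centered0 (X : set pt) x r : X x -> 0 <= r -> centered X x r 0.
Proof. by move=> Xx r0; exists x; rewrite ?subrr //; split; rewrite // subrr enorm0. Qed.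

Lemma centered_mono (X : set pt) x r r' s : r <= r' -> centered X x r s -> centered X x r' s.
Proof. by move=> rr [x' [Xx' h] <-]; exists x' => //; split => //; apply: le_trans rr. Qed.

Lemma compose (X Y W : set pt) x y w (alpha b c : R) :
  periodic_set Y -> X x -> Y y -> W w -> 0 <= b -> 0 <= c -> b + c <= alpha ->
  dR (centered X x (alpha - b)) (centered Y y alpha) <= b ->
  dR (centered Y y (alpha - c)) (centered W w alpha) <= c ->
  dR (centered X x (alpha - (b + c))) (centered W w alpha) <= b + c.
Proof.
move=> pY Xx Yy Ww b0 c0 bca h1 h2.
have a0 : 0 <= alpha by apply: le_trans bca; rewrite addr_ge0.
have [L hL] := cluster_finite y alpha pY.
have [e0 e00 he0] := pos_below [seq enorm (z - y) - (alpha - c) | z <- L].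
apply: (@le_small _ _ e0) => // e2 e2pos e2lt.
pose e := e2 / 2.
have epos : 0 < e by rewrite divr_gt0.
have ee : e2 = e + e by rewrite /e -splitr.
have elt : e < e0 by apply: le_lt_trans e2lt; rewrite ee lerDr ltW.
have h1' : dR (centered X x (alpha - b)) (centered Y y alpha) < b + e.
  by apply: le_lt_trans h1 _; rewrite ltrDl.
have h2' : dR (centered Y y (alpha - c)) (centered W w alpha) < c + e.
  by apply: le_lt_trans h2 _; rewrite ltrDl.
have [A1 [oA1 hA1]] := dR_lt (@centered_le X x _) (centered0 Yy a0) h1'.
have [A2 [oA2 hA2]] := dR_lt (@centered_le Y y _) (centered0 Ww a0) h2'.
apply: (dR_le (A := A1 *m A2)); first exact: orthomxM.
apply: dH_le.
  by exists (0 *m (A1 *m A2)), 0 => //; apply: centered0 => //; rewrite subr_ge0.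
move=> _ [s Cs <-].
have Cs' : centered X x (alpha - b) s.
  by apply: centered_mono Cs; rewrite lerD2l lerN2 lerDl.
have [d1 [Cd1 hd1]] := hA1 s Cs'.
have Cd1' : centered Y y (alpha - c) d1.
  case: Cd1 => z [Yz hz] zd1; exists z => //; split => //.
  have zL : z \in L by apply: hL.
  have lt : enorm (z - y) < alpha - c + e.
    rewrite zd1; apply: le_lt_trans (_ : enorm (d1 - s *m A1) + enorm (s *m A1 - 0) < _).
      by have := enorm_tri d1 (s *m A1) 0; rewrite !subr0.
    rewrite subr0 orthomx_enorm // enormB addrC.
    have := centered_le Cs; lra.
  rewrite leNgt; apply/negP => gt.
  have := he0 (enorm (z - y) - (alpha - c)) (map_f _ zL).
  rewrite subr_gt0 => /(_ gt); lra.
have [d2 [Cd2 hd2]] := hA2 d1 Cd1'.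
exists d2; split => //.
apply: le_trans (enorm_tri _ (d1 *m A2) _) _.
rewrite mulmxA -mulmxBl orthomx_enorm //; lra.
Qed.


Lemma polar u v : dot u v = (dot u u + dot v v - dot (u - v) (u - v)) / 2.
Proof. rewrite !dotBl !dotBr (dotC v u); field; done. Qed.

Lemma dot_pres (h : pt -> pt) u v :
  enorm (h u - h v) = enorm (u - v) -> enorm (h u - 0) = enorm (u - 0) ->
  enorm (h v - 0) = enorm (v - 0) -> dot (h u) (h v) = dot u v.
Proof.
move=> e1 e2 e3; rewrite polar (polar u v) -!enorm_sqr e1.
by move: e2 e3; rewrite !subr0 => -> ->.
Qed.

Lemma exact_seq (C : set pt) (L : seq pt) : (forall c, C c -> c \in L) ->
  exists s : seq pt, uniq s /\ forall c, (c \in s) <-> C c.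
Proof.
move=> hL; exists (undup [seq c <- L | `[< C c >]]); split; first exact: undup_uniq.
move=> c; rewrite mem_undup mem_filter; split.
  by move=> /andP[/asboolP].
by move=> Cc; rewrite hL // andbT; apply/asboolP.
Qed.

Lemma bij (C D : set pt) (LC LD : seq pt) A B :
  (forall c, C c -> c \in LC) -> (forall d, D d -> d \in LD) ->
  Defs.orthomx A -> Defs.orthomx B ->
  (forall c, C c -> D (c *m A)) -> (forall d, D d -> C (d *m B)) ->
  forall d, D d -> exists c, C c /\ d = c *m A.
Proof.
move=> hC hD oA oB CA DB.
have [sC [uC mC]] := exact_seq hC.
have [sD [uD mD]] := exact_seq hD.
have uCA : uniq (map (fun c => c *m A) sC).
  by rewrite map_inj_uniq // => u v; exact: orthomx_inj.
have uDB : uniq (map (fun c => c *m B) sD).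
  by rewrite map_inj_uniq // => u v; exact: orthomx_inj.
have subA : {subset map (fun c => c *m A) sC <= sD}.
  by move=> _ /mapP[c cs ->]; apply/mD/CA/mC.
have subB : {subset map (fun c => c *m B) sD <= sC}.
  by move=> _ /mapP[c cs ->]; apply/mC/DB/mD.
have le1 := uniq_leq_size uCA subA.
have le2 := uniq_leq_size uDB subB.
rewrite !size_map in le1 le2.
have sz : (size sD <= size (map (fun c => c *m A) sC))%N by rewrite size_map.
have [_ eq] := uniq_min_size uCA subA sz.
move=> d Dd; have : d \in map (fun c => c *m A) sC by rewrite eq; apply/mD.
by move=> /mapP[c cs ->]; exists c; split => //; apply/mC.
Qed.

Lemma approx_iso (C D : set pt) (LC LD : seq pt) r :
  (forall c, C c -> c \in LC) -> (forall d, D d -> d \in LD) ->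
  (forall c, C c -> enorm c <= r) -> C 0 -> D 0 -> dR C D <= 0 ->
  exists A, Defs.orthomx A /\ forall c, C c -> D (c *m A).
Proof.
move=> hC hD Cr C0 D0 h.
set U := LC ++ LD.
have [de de0 hde] := gap [seq enorm (u - v) | u <- U, v <- U].
pose e := de / 2.
have epos : 0 < e by rewrite divr_gt0.
have [A [oA hA]] := dR_lt Cr D0 (le_lt_trans h epos).
have [phi hphi] : exists phi : pt -> pt, forall c, C c -> D (phi c) /\ enorm (c *m A - phi c) < e.
  have [f hf] := @choice _ _ (fun c d => C c -> D d /\ enorm (c *m A - d) < e) (fun c =>
    match pselect (C c) with
    | left Cc => let: ex_intro d hd := hA c Cc in ex_intro _ d (fun _ => hd)
    | right nCc => ex_intro _ 0 (fun Cc => False_ind _ (nCc Cc))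
    end).
  by exists f.
have inU u : C u \/ D u -> u \in U.
  by case=> [/hC|/hD]; rewrite mem_cat => -> //; rewrite orbT.
have key u v : C u -> C v -> enorm (phi u - phi v) = enorm (u - v).
  move=> Cu Cv; apply: hde; try apply: allpairs_f; try apply: inU; auto.
    by right; case: (hphi u Cu). by right; case: (hphi v Cv).
  have e1 : enorm (u *m A - v *m A) = enorm (u - v) by rewrite -mulmxBl orthomx_enorm.
  have [_ q1] := hphi u Cu; have [_ q2] := hphi v Cv.
  have t1 : enorm (phi u - phi v) <= enorm (u *m A - phi u) + enorm (u - v) + enorm (v *m A - phi v).
    have a := enorm_tri (phi u) (u *m A) (phi v); have b := enorm_tri (u *m A) (v *m A) (phi v).
    rewrite (enormB (phi u) (u *m A)) in a; rewrite e1 in b; lra.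
  have t2 : enorm (u - v) <= enorm (u *m A - phi u) + enorm (phi u - phi v) + enorm (v *m A - phi v).
    have a := enorm_tri (u *m A) (phi u) (v *m A); have b := enorm_tri (phi u) (phi v) (v *m A).
    rewrite e1 in a; rewrite (enormB (phi v) (v *m A)) in b; lra.
  rewrite /e in q1 q2; rewrite ltr_norml; apply/andP; split; lra.
have phi0 : phi 0 = 0.
  have [D0' q0] := hphi 0 C0.
  apply: enorm_eq0; have : enorm (phi 0 - 0) = enorm (0 - 0 : pt).
    apply: hde; try apply: allpairs_f; try apply: inU; auto.
    rewrite !subr0 enorm0 subr0 ger0_norm ?enorm_ge0 //.
    move: q0; rewrite mul0mx sub0r enormN /e; have := enorm_ge0 (phi 0); lra.
  by rewrite !subr0 enorm0.
have dp u v : C u -> C v -> dot (phi u) (phi v) = dot u v.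
  move=> Cu Cv; apply: dot_pres; first exact: key.
    by rewrite -{1}phi0 key.
  by rewrite -{1}phi0 key.
have [B [oB hB]] := householder (fun u v _ _ Cu Cv => dp u v Cu Cv) : exists B, _ /\ forall u, u \in LC -> C u -> _.
exists B; split => // c Cc; rewrite hB //; last exact: hC.
by case: (hphi c Cc).
Qed.

End Aux.

Section Main.
Variables (R : realType) (n : nat).
Notation pt := 'rV[R]_n.

Lemma cent_cover (X : set pt) x r : periodic_set X ->
  exists L : seq pt, forall c, centered X x r c -> c \in L.
Proof.
move=> pX; have [L hL] := cluster_finite x r pX.
by exists [seq y - x | y <- L] => _ [y Cy <-]; apply: map_f; apply: hL.
Qed.

Lemma part_a (alpha : R) (halpha : 0 <= alpha) (S Q : set pt) p q :
  periodic_set S -> S p -> periodic_set Q -> Q q ->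
  (is_dC alpha S p Q q 0 <-> same_class alpha S p Q q).
Proof.
move=> pS Sp pQ Qq; split.
  move=> [[_ [h1 h2]] _]; rewrite subr0 in h1 h2.
  have [LS hLS] := cent_cover p alpha pS.
  have [LQ hLQ] := cent_cover q alpha pQ.
  have [A [oA hA]] := approx_iso hLS hLQ (@centered_le _ _ S p alpha)
    (centered0 Sp halpha) (centered0 Qq halpha) h1.
  have [B [oB hB]] := approx_iso hLQ hLS (@centered_le _ _ Q q alpha)
    (centered0 Qq halpha) (centered0 Sp halpha) h2.
  have sur := bij hLS hLQ oA oB hA hB.
  exists (fun x => (x - p) *m A + q); split; [|split].
  - move=> x y; rewrite opprD addrACA subrr addr0 -mulmxBl orthomx_enorm //.
    by rewrite opprB addrA subrK.
  - by rewrite subrr mul0mx add0r.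
  - apply/seteqP; split => [_ [x Cx <-]|y Cy].
      have /hA [y Cy e] : centered S p alpha (x - p) by exists x.
      by rewrite -e subrK.
    have [c [[x Cx <-] e]] := sur (y - q) (ex_intro2 _ _ y Cy erefl).
    by exists x => //; rewrite -e subrK.
move=> [g [ig [gp gim]]].
have [LS hLS] := cent_cover p alpha pS.
pose h (c : pt) := g (c + p) - q.
have hiso u v : enorm (h u - h v) = enorm (u - v).
  by rewrite /h opprB addrA subrK ig opprD addrACA subrr addr0.
have h0 : h 0 = 0 by rewrite /h add0r gp subrr.
have hn u : enorm (h u - 0) = enorm (u - 0) by rewrite -{1}h0 hiso.
have [A [oA hA]] := @householder R n LS (centered S p alpha) h (fun u v _ _ _ _ =>
  dot_pres (hiso u v) (hn u) (hn v)).
have AQ c : centered S p alpha c -> centered Q q alpha (c *m A).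
  move=> Cc; rewrite hA //; last exact: hLS.
  case: Cc => x Cx <-; exists (g x); last by rewrite /h subrK.
  by rewrite -gim; exists x.
have QA d : centered Q q alpha d -> exists c, centered S p alpha c /\ d = c *m A.
  case=> y; rewrite -gim => -[x Cx <-] <-.
  have Cc : centered S p alpha (x - p) by exists x.
  by exists (x - p); split => //; rewrite hA ?hLS // /h subrK.
split; last by move=> e [/andP[e0 _] _].
split; first by rewrite lexx halpha.
rewrite subr0; split.
  apply: (dR_le (A := A)) => //; apply: dH_le.
    by exists (0 *m A), 0 => //; exact: centered0.
  by move=> _ [c Cc <-]; exists (c *m A); split; [exact: AQ|rewrite subrr enorm0].
apply: (dR_le (A := A^T)); first exact: orthomxT.
apply: dH_le; first by exists (0 *m A^T), 0 => //; exact: centered0.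
move=> _ [d Cd <-]; have [c [Cc ->]] := QA d Cd.
exists c; split => //; rewrite -mulmxA oA mulmx1 subrr enorm0 //.
Qed.

End Main.

Theorem mainTheorem3 (R : realType) (n : nat) (alpha : R) (halpha : 0 <= alpha) :
  (* (a) *)
  (forall (S Q : set 'rV[R]_n) (p q : 'rV[R]_n),
      periodic_set S -> S p -> periodic_set Q -> Q q ->
      (is_dC alpha S p Q q 0 <-> same_class alpha S p Q q)) /\
  (* (b) *)
  (forall (S Q : set 'rV[R]_n) (p q : 'rV[R]_n) (d : R),
      periodic_set S -> S p -> periodic_set Q -> Q q ->
      (is_dC alpha S p Q q d <-> is_dC alpha Q q S p d)) /\
  (* (c) *)
  (forall (S Q Z : set 'rV[R]_n) (p q z : 'rV[R]_n) (a b c : R),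
      periodic_set S -> S p -> periodic_set Q -> Q q -> periodic_set Z -> Z z ->
      is_dC alpha S p Z z a -> is_dC alpha S p Q q b -> is_dC alpha Q q Z z c ->
      a <= b + c).
Proof.
split; first by move=> S Q p q; exact: part_a.
split.
  move=> S Q p q d _ _ _ _.
  have sw e : dC_set alpha S p Q q e <-> dC_set alpha Q q S p e.
    by split=> [[h [h1 h2]]|[h [h1 h2]]].
  split => [[h1 h2]|[h1 h2]]; split.
  - by apply/sw.
  - by move=> e /sw /h2.
  - by apply/sw.
  - by move=> e /sw /h2.
move=> S Q Z p q z a b c pS Sp pQ Qq pZ Zz [ha amin] [hb _] [hc _].
case: hb => /andP[b0 ba] [b1 b2]; case: hc => /andP[c0 ca] [c1 c2].
have [bca|bca] := lerP (b + c) alpha; last first.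
  by case: ha => /andP[_ aa] _; apply: le_trans aa (ltW bca).
apply: amin; split; first by rewrite addr_ge0.
split; first exact: (compose pQ Sp Qq Zz b0 c0 bca b1 c1).
rewrite (addrC b c); apply: (compose pQ Zz Qq Sp c0 b0 _ c2 b2).
by rewrite addrC.
Qed.
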